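(* Let $\{x_i\}_{i\in[N]}$ be the global solution of the delayed consensus system described in the context. Then for almost all $t>2\tau$, \[ \frac{\mathrm d}{\mathrm dt}d_x(t)\le 4\int_{t-\tau}^t d_x(s-\tau)\,\mathrm ds+4\tau\int_{t-2\tau}^t\max_{l\in[N]}|\dot x_l(r)|\,\mathrm dr-N\underline a(t)d_x(t), \] where $\underline a(t):=\min_{i,j\in[N]}a_{ij}(t)$.
   Context: Let $N\ge2$, $d\ge1$ be integers, $[N]=\{1,\dots,N\}$, $0\le\sigma\le\tau$. Let $\psi:[0,\infty)\to[0,\infty)$ be continuous, nonincreasing, positive everywhere, with $\sup\psi\le1$. Given $x_i^0\in C([-\tau,0],\mathbb{R}^d)$, $\{x_i\}$ is the global solution (continuous on $[-\tau,\infty)$, continuously differentiable on $[0,\infty)$) of $\dot x_i(t)=\sum_{j\ne i}a_{ij}(t)(x_j(t-\tau)-x_i(t-\sigma))$ for $t>0$, with $a_{ij}(t)=\frac1{N-1}\psi(|x_i(t-\sigma)-x_j(t-\tau)|)$ for all $i,j\in[N]$, and $x_i=x_i^0$ on $[-\tau,0]$. $d_x(t):=\max_{i,j\in[N]}|x_i(t)-x_j(t)|$. *)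

(* Defs.v *)
From Stdlib Require Import Reals List.
From Coquelicot Require Import Coquelicot.

Local Open Scope R_scope.

Definition sumR (n : nat) (f : nat -> R) : R :=
  fold_right Rplus 0 (map f (List.seq 0 n)).

(* max / min over k = 0, ..., n-1 (meaningful for n >= 1) *)
Definition maxR (n : nat) (f : nat -> R) : R :=
  fold_right Rmax (f 0%nat) (map f (List.seq 0 n)).
Definition minR (n : nat) (f : nat -> R) : R :=
  fold_right Rmin (f 0%nat) (map f (List.seq 0 n)).

Definition enorm (d : nat) (v : nat -> R) : R :=
  sqrt (sumR d (fun k => v k ^ 2)).

(* A trajectory: x i t k = k-th component of x_i(t), i in {0..N-1}, k in {0..d-1}. *)
Definition traj := nat -> R -> nat -> R.

Definition acoef (N d : nat) (psi : R -> R) (sigma tau : R) (x : traj)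
    (i j : nat) (t : R) : R :=
  / INR (N - 1) * psi (enorm d (fun k => x i (t - sigma) k - x j (t - tau) k)).

Definition amin (N d : nat) (psi : R -> R) (sigma tau : R) (x : traj) (t : R) : R :=
  minR N (fun i => minR N (fun j => acoef N d psi sigma tau x i j t)).

Definition dx (N d : nat) (x : traj) (t : R) : R :=
  maxR N (fun i => maxR N (fun j => enorm d (fun k => x i t k - x j t k))).

Definition maxvel (N d : nat) (x : traj) (r : R) : R :=
  maxR N (fun l => enorm d (fun k => Derive (fun s => x l s k) r)).

Definition rhs (N d : nat) (psi : R -> R) (sigma tau : R) (x : traj)
    (i : nat) (t : R) (k : nat) : R :=
  sumR N (fun j => if Nat.eqb j i then 0
                   else acoef N d psi sigma tau x i j t * (x j (t - tau) k - x i (t - sigma) k)).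

Definition is_solution (N d : nat) (psi : R -> R) (sigma tau : R) (x : traj) : Prop :=
  (forall i k, (i < N)%nat -> (k < d)%nat -> forall t, - tau <= t ->
     filterlim (fun s => x i s k) (within (fun s => - tau <= s) (locally t))
       (locally (x i t k))) /\
  (forall i k, (i < N)%nat -> (k < d)%nat -> forall t, 0 < t ->
     is_derive (fun s => x i s k) t (rhs N d psi sigma tau x i t k)).

From mathcomp Require Import all_boot all_algebra.
From mathcomp Require Import all_classical all_reals.
From mathcomp Require Import Rstruct Rstruct_topology measure lebesgue_measure.

Definition ae_R (P : R -> Prop) : Prop :=
  (@lebesgue_measure R).-negligible [set t | ~ P t].

(* Main.v *)
Require Import Defs.
From Stdlib Require Import Reals.
From Coquelicot Require Import Coquelicot.
From Stdlib Require Import Lra Lia List ZArith.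
From mathcomp Require all_boot all_classical all_reals Rstruct Rstruct_topology measure lebesgue_measure.
Open Scope R_scope.

Lemma sumR_0 f : sumR 0 f = 0.
Proof. reflexivity. Qed.

Lemma fold_plus_acc (L : list R) a : fold_right Rplus a L = fold_right Rplus 0 L + a.
Proof. induction L as [|y L IH]; simpl; [lra|rewrite IH; lra]. Qed.

Lemma sumR_S n f : sumR (S n) f = sumR n f + f n.
Proof.
  unfold sumR. rewrite seq_S, map_app, fold_right_app. simpl.
  rewrite fold_plus_acc. lra.
Qed.

Lemma sumR_ext n f g : (forall k, (k < n)%nat -> f k = g k) -> sumR n f = sumR n g.
Proof.
  induction n as [|n IH]; intros H; [reflexivity|].
  rewrite !sumR_S, IH, H; auto; lia.
Qed.

Lemma sumR_le n f g : (forall k, (k < n)%nat -> f k <= g k) -> sumR n f <= sumR n g.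
Proof.
  induction n as [|n IH]; intros H; [rewrite !sumR_0; lra|].
  rewrite !sumR_S. apply Rplus_le_compat; [apply IH; intros; apply H; lia| apply H; lia].
Qed.

Lemma sumR_nonneg n f : (forall k, (k < n)%nat -> 0 <= f k) -> 0 <= sumR n f.
Proof.
  intros H. replace 0 with (sumR n (fun _ => 0)).
  - apply sumR_le; auto.
  - induction n; [reflexivity| rewrite sumR_S, IHn; [lra| intros; apply H; lia]].
Qed.

Lemma sumR_plus n f g : sumR n (fun k => f k + g k) = sumR n f + sumR n g.
Proof. induction n; [rewrite !sumR_0; lra| rewrite !sumR_S, IHn; lra]. Qed.

Lemma sumR_minus n f g : sumR n (fun k => f k - g k) = sumR n f - sumR n g.
Proof. induction n; [rewrite !sumR_0; lra| rewrite !sumR_S, IHn; lra]. Qed.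

Lemma sumR_scal n c f : sumR n (fun k => c * f k) = c * sumR n f.
Proof. induction n; [rewrite !sumR_0; lra| rewrite !sumR_S, IHn; lra]. Qed.

Lemma sumR_const n c : sumR n (fun _ => c) = INR n * c.
Proof. induction n; [rewrite !sumR_0; simpl; lra| rewrite !sumR_S, IHn, S_INR; lra]. Qed.

Lemma sumR_swap n m (F : nat -> nat -> R) :
  sumR n (fun k => sumR m (fun j => F j k)) = sumR m (fun j => sumR n (fun k => F j k)).
Proof.
  induction n.
  { rewrite sumR_0. transitivity (sumR m (fun _ => 0)); [rewrite sumR_const; lra| apply sumR_ext; reflexivity]. }
  rewrite sumR_S, IHn, <- sumR_plus. apply sumR_ext. intros. rewrite sumR_S. reflexivity.
Qed.

Lemma sumR_indic n i : (i < n)%nat ->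
  sumR n (fun m => if Nat.eqb m i then 0 else 1) = INR n - 1.
Proof.
  induction n; intros Hi; [lia|].
  rewrite sumR_S, S_INR. destruct (Nat.eqb n i) eqn:E.
  - apply Nat.eqb_eq in E. subst.
    rewrite (sumR_ext _ _ (fun _ => 1)). rewrite sumR_const; lra.
    intros k Hk. destruct (Nat.eqb k i) eqn:E2; [apply Nat.eqb_eq in E2; lia| reflexivity].
  - apply Nat.eqb_neq in E. rewrite IHn by lia. lra.
Qed.

Lemma fold_max_ge_acc (L : list R) a : a <= fold_right Rmax a L.
Proof. induction L; simpl; [lra| eapply Rle_trans; [exact IHL| apply Rmax_r]]. Qed.

Lemma fold_max_ge (L : list R) a y : In y L -> y <= fold_right Rmax a L.
Proof.
  induction L; simpl; [tauto|]. intros [->|H]; [apply Rmax_l|].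
  eapply Rle_trans; [apply IHL; auto| apply Rmax_r].
Qed.

Lemma fold_max_ex (L : list R) a : fold_right Rmax a L = a \/ In (fold_right Rmax a L) L.
Proof.
  revert a; induction L as [|b L IHL]; intros a; cbn [fold_right In]; [auto|].
  specialize (IHL a). rename b into a0. rename a into b. rename a0 into a. rename b into a0.
  destruct (Rle_dec a (fold_right Rmax a0 L)).
  - rewrite (Rmax_right a (fold_right Rmax a0 L) r). destruct IHL as [H|H]; [left; exact H| right; right; exact H].
  - rewrite (Rmax_left a (fold_right Rmax a0 L)) by lra. right; left; reflexivity.
Qed.

Lemma maxR_ge n f k : (k < n)%nat -> f k <= maxR n f.
Proof.
  intros Hk. unfold maxR. apply fold_max_ge. apply in_map. apply in_seq. lia.
Qed.

Lemma maxR_ex n f : (0 < n)%nat -> exists k, (k < n)%nat /\ maxR n f = f k.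
Proof.
  intros Hn. unfold maxR. destruct (fold_max_ex (map f (seq 0 n)) (f 0%nat)) as [H|H].
  - exists 0%nat. split; auto.
  - apply in_map_iff in H. destruct H as [k [Hk Hin]]. apply in_seq in Hin.
    exists k. split; [lia| auto].
Qed.

Lemma maxR_ub n f M : (0 < n)%nat -> (forall k, (k < n)%nat -> f k <= M) -> maxR n f <= M.
Proof. intros Hn H. destruct (maxR_ex n f Hn) as [k [Hk ->]]. auto. Qed.

Lemma fold_min_le (L : list R) a y : In y L -> fold_right Rmin a L <= y.
Proof.
  induction L; simpl; [tauto|]. intros [->|H]; [apply Rmin_l|].
  eapply Rle_trans; [apply Rmin_r| apply IHL; auto].
Qed.

Lemma minR_le n f k : (k < n)%nat -> minR n f <= f k.
Proof.
  intros Hk. unfold minR. apply fold_min_le. apply in_map. apply in_seq. lia.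
Qed.

Definition ip (d : nat) (u v : nat -> R) := sumR d (fun k => u k * v k).

Lemma enorm_ip d u : enorm d u = sqrt (ip d u u).
Proof. unfold enorm, ip. f_equal. apply sumR_ext. intros. ring. Qed.

Lemma ip_nonneg d u : 0 <= ip d u u.
Proof. apply sumR_nonneg. intros. apply Rle_0_sqr. Qed.

Lemma enorm_nonneg d u : 0 <= enorm d u.
Proof. apply sqrt_pos. Qed.

Lemma enorm_sq d u : enorm d u * enorm d u = ip d u u.
Proof. rewrite enorm_ip. apply sqrt_sqrt. apply ip_nonneg. Qed.

Lemma cs_aux d u v a : 0 < a -> 2 * ip d u v <= ip d u u / a + a * ip d v v.
Proof.
  intros Ha. unfold ip, Rdiv.
  rewrite <- sumR_scal, Rmult_comm, <- sumR_scal, <- sumR_scal, <- sumR_plus.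
  apply sumR_le. intros k _.
  assert (0 <= (u k - a * v k) * (u k - a * v k) / a).
  { unfold Rdiv. apply Rmult_le_pos; [apply Rle_0_sqr| left; apply Rinv_0_lt_compat; auto]. }
  replace ((u k - a * v k) * (u k - a * v k) / a) with
    (/ a * (u k * u k) + a * (v k * v k) - 2 * (u k * v k)) in H by (field; lra).
  lra.
Qed.

Lemma cauchy_schwarz d u v : ip d u v <= enorm d u * enorm d v.
Proof.
  pose proof (enorm_sq d u) as Hu. pose proof (enorm_sq d v) as Hv.
  pose proof (enorm_nonneg d u). pose proof (enorm_nonneg d v).
  set (A := enorm d u) in *. set (B := enorm d v) in *.
  destruct (Rle_lt_or_eq_dec 0 A H) as [HA|HA]; destruct (Rle_lt_or_eq_dec 0 B H0) as [HB|HB].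
  - pose proof (cs_aux d u v (A / B)) as C.
    assert (0 < A / B) by (apply Rdiv_lt_0_compat; auto).
    specialize (C H1). rewrite <- Hu, <- Hv in C.
    replace (A * A / (A / B) + A / B * (B * B)) with (2 * (A * B)) in C by (field; lra). lra.
  -
    assert (forall a, 0 < a -> 2 * ip d u v <= ip d u u / (2*a)) as K.
    { intros a Ha. pose proof (cs_aux d u v (2*a)) as C. rewrite <- Hv, <- HB in C.
      assert (0 < 2*a) by lra. specialize (C H1). rewrite Rmult_0_l, Rmult_0_r, Rplus_0_r in C. exact C. }
    rewrite <- HB, Rmult_0_r.
    apply Rnot_lt_le. intros Hc.
    set (q := ip d u v) in *. set (w := ip d u u) in *.
    assert (0 <= w) by apply ip_nonneg.
    specialize (K ((w + 1) / q)). 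
    assert (0 < (w+1)/q) by (apply Rdiv_lt_0_compat; lra).
    specialize (K H2). replace (w / (2 * ((w + 1) / q))) with (q * w / (2 * (w+1))) in K by (field; lra).
    assert (q * w / (2 * (w + 1)) < q).
    { apply Rmult_lt_reg_r with (2*(w+1)); [lra|]. unfold Rdiv. rewrite Rmult_assoc, Rinv_l by lra. nra. }
    lra.
  -
    assert (forall a, 0 < a -> 2 * ip d u v <= a * ip d v v) as K.
    { intros a Ha. pose proof (cs_aux d u v a Ha) as C. rewrite <- Hu, <- HA in C.
      replace (0 * 0 / a) with 0 in C by (field; lra). lra. }
    rewrite <- HA, Rmult_0_l.
    apply Rnot_lt_le. intros Hc.
    set (q := ip d u v) in *. set (w := ip d v v) in *.
    assert (0 <= w) by apply ip_nonneg.
    specialize (K (q / (2 * (w + 1)))).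
    assert (0 < q / (2*(w+1))) by (apply Rdiv_lt_0_compat; lra).
    specialize (K H2).
    assert (q / (2 * (w + 1)) * w < q).
    { unfold Rdiv. replace (q * / (2 * (w + 1)) * w) with (q * (w / (2*(w+1)))) by (field; lra).
      assert (w / (2*(w+1)) < 1).
      { apply Rmult_lt_reg_r with (2*(w+1)); [lra|]. unfold Rdiv. rewrite Rmult_assoc, Rinv_l by lra. lra. }
      nra. }
    lra.
  - rewrite <- HA, Rmult_0_l.
    pose proof (cs_aux d u v 1 Rlt_0_1) as C. rewrite <- Hu, <- Hv, <- HA, <- HB in C. lra.
Qed.

Lemma cont_plus (f g : R -> R) (t : R) : continuous f t -> continuous g t -> continuous (fun s => f s + g s) t.
Proof. intros. exact (continuous_plus f g t H H0). Qed.
Lemma cont_minus (f g : R -> R) (t : R) : continuous f t -> continuous g t -> continuous (fun s => f s - g s) t.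
Proof. intros. exact (continuous_minus f g t H H0). Qed.
Lemma cont_mult (f g : R -> R) (t : R) : continuous f t -> continuous g t -> continuous (fun s => f s * g s) t.
Proof. intros. exact (continuous_mult f g t H H0). Qed.
Lemma cont_const (c t : R) : continuous (fun _ => c) t.
Proof. apply continuous_const. Qed.
Lemma cont_comp (f g : R -> R) (t : R) : continuous f t -> continuous g (f t) -> continuous (fun s => g (f s)) t.
Proof. intros. exact (continuous_comp f g t H H0). Qed.
Lemma cont_abs (f : R -> R) (t : R) : continuous f t -> continuous (fun s => Rabs (f s)) t.
Proof. intros. apply cont_comp; auto. apply continuous_Rabs. Qed.
Lemma cont_max (f g : R -> R) (t : R) : continuous f t -> continuous g t -> continuous (fun s => Rmax (f s) (g s)) t.
Proof.
  intros Hf Hg.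
  apply (continuous_ext (fun s => (f s + g s + Rabs (f s - g s)) / 2)).
  { intros s. unfold Rmax. destruct (Rle_dec (f s) (g s)).
    - rewrite Rabs_left1 by lra. lra.
    - rewrite Rabs_right by lra. lra. }
  unfold Rdiv. apply cont_mult; [|apply cont_const].
  apply cont_plus; [apply cont_plus; auto| apply cont_abs; apply cont_minus; auto].
Qed.
Lemma cont_sqrt (f : R -> R) (t : R) : 0 <= f t -> continuous f t -> continuous (fun s => sqrt (f s)) t.
Proof.
  intros. apply cont_comp; auto. apply continuity_pt_filterlim. apply continuity_pt_sqrt; auto.
Qed.

Lemma cont_sumR n (F : nat -> R -> R) t :
  (forall k, (k < n)%nat -> continuous (F k) t) -> continuous (fun s => sumR n (fun k => F k s)) t.
Proof.
  induction n; intros H.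
  - apply (continuous_ext (fun _ => 0)); [intros; reflexivity| apply cont_const].
  - apply (continuous_ext (fun s => sumR n (fun k => F k s) + F n s)).
    { intros; rewrite sumR_S; reflexivity. }
    apply cont_plus; [apply IHn; intros; apply H; lia| apply H; lia].
Qed.

Lemma derive_sumR n (F : nat -> R -> R) (F' : nat -> R) t :
  (forall k, (k < n)%nat -> is_derive (F k) t (F' k)) ->
  is_derive (fun s => sumR n (fun k => F k s)) t (sumR n F').
Proof.
  induction n; intros H.
  - apply (is_derive_ext (fun _ => 0)); [intros; reflexivity| apply is_derive_Reals, derivable_pt_lim_const].
  - apply (is_derive_ext (fun s => sumR n (fun k => F k s) + F n s)).
    { intros; rewrite sumR_S; reflexivity. }
    rewrite sumR_S. apply (is_derive_plus (fun s => sumR n (fun k => F k s)) (F n));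
      [apply IHn; intros; apply H; lia| apply H; lia].
Qed.

Lemma deriv_cont (f : R -> R) (t l : R) : is_derive f t l -> continuous f t.
Proof.
  intros H. apply continuity_pt_filterlim. apply derivable_continuous_pt.
  exists l. apply is_derive_Reals. exact H.
Qed.

Lemma locally_pos (h : R -> R) (t : R) : continuous h t -> 0 < h t -> locally t (fun s => 0 < h s).
Proof.
  intros Hc Hp. apply Hc. apply (open_gt 0). exact Hp.
Qed.

Lemma iso_zero (g : R -> R) (t l : R) : g t = 0 -> is_derive g t l -> l <> 0 ->
  exists n : nat, forall s, g s = 0 -> Rabs (s - t) < / INR (S n) -> s = t.
Proof.
  intros H0 Hd Hl. apply is_derive_Reals in Hd.
  destruct (Hd (Rabs l / 2)) as [del Hdel]. { apply Rdiv_lt_0_compat; [apply Rabs_pos_lt; auto| lra]. }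
  destruct (archimed (/ del)) as [A1 _].
  assert (Hdp : 0 < del) by apply cond_pos.
  assert (Hz : (0 < up (/ del))%Z).
  { apply lt_IZR. pose proof (Rinv_0_lt_compat _ Hdp). simpl. lra. }
  exists (Z.to_nat (up (/ del))).
  intros s Hs Hst.
  destruct (Req_dec s t) as [E|E]; auto. exfalso.
  assert (HN : INR (S (Z.to_nat (up (/ del)))) > / del).
  { rewrite S_INR, INR_IZR_INZ, Z2Nat.id by lia. lra. }
  assert (Hh : Rabs (s - t) < del).
  { eapply Rlt_trans; [exact Hst|].
    unfold Rgt in HN.
    assert (/ INR (S (Z.to_nat (up (/ del)))) < / / del) as HH.
    { apply Rinv_lt_contravar; [|exact HN].
      apply Rmult_lt_0_compat; [apply Rinv_0_lt_compat; auto| apply lt_0_INR; lia]. }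
    rewrite Rinv_inv in HH. exact HH. }
  specialize (Hdel (s - t)). replace (t + (s - t)) with s in Hdel by ring.
  rewrite Hs, H0 in Hdel. replace ((0 - 0) / (s - t) - l) with (- l) in Hdel by (field; intro; apply E; lra).
  rewrite Rabs_Ropp in Hdel. assert (0 < Rabs l) by (apply Rabs_pos_lt; auto).
  specialize (Hdel ltac:(lra) Hh). lra.
Qed.

Definition good (t M l : R) (u : R -> R) :=
  (continuous u t /\ u t < M) \/ (u t = M /\ is_derive u t l).

Lemma derive_max_eq (u w : R -> R) (t l : R) :
  is_derive u t l -> is_derive w t l -> u t = w t ->
  is_derive (fun s => Rmax (u s) (w s)) t l.
Proof.
  intros Hu Hw E. apply is_derive_Reals in Hu, Hw. apply is_derive_Reals.
  intros eps Heps. destruct (Hu eps Heps) as [d1 H1]. destruct (Hw eps Heps) as [d2 H2].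
  assert (0 < Rmin d1 d2) by (apply Rmin_pos; apply cond_pos).
  exists (mkposreal _ H). simpl. intros h Hh0 Hh.
  specialize (H1 h Hh0 ltac:(eapply Rlt_le_trans; [exact Hh| apply Rmin_l])).
  specialize (H2 h Hh0 ltac:(eapply Rlt_le_trans; [exact Hh| apply Rmin_r])).
  cbv beta. replace (Rmax (u t) (w t)) with (u t) by (rewrite <- E; symmetry; apply Rmax_left; lra).
  apply (Rmax_case_strong (u (t + h)) (w (t + h)) (fun z => Rabs ((z - u t) / h - l) < eps)); intros _;
    [exact H1| rewrite E; exact H2].
Qed.

Lemma good_max (t M l : R) (u w : R -> R) : good t M l u -> good t M l w -> good t M l (fun s => Rmax (u s) (w s)).
Proof.
  intros [[Cu Lu]|[Eu Du]] [[Cw Lw]|[Ew Dw]].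
  - left. split; [apply cont_max; auto| apply Rmax_lub_lt; auto].
  - right. split; [rewrite Rmax_right; lra|].
    apply (is_derive_ext_loc w); auto.
    assert (Cw : continuous w t) by (apply (deriv_cont w t l Dw)).
    apply (filter_imp (fun s => 0 < w s - u s)).
    { intros s Hs. rewrite Rmax_right; lra. }
    apply locally_pos; [apply cont_minus; auto| lra].
  - right. split; [rewrite Rmax_left; lra|].
    apply (is_derive_ext_loc u); auto.
    assert (Cu : continuous u t) by (apply (deriv_cont u t l Du)).
    apply (filter_imp (fun s => 0 < u s - w s)).
    { intros s Hs. rewrite Rmax_left; lra. }
    apply locally_pos; [apply cont_minus; auto| lra].
  - right. split; [rewrite Eu, Ew; apply Rmax_left; lra|].
    apply derive_max_eq; auto. congruence.
Qed.

Lemma good_fold t M l (F : nat -> R -> R) a0 L :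
  good t M l (F a0) -> (forall k, In k L -> good t M l (F k)) ->
  good t M l (fun s => fold_right Rmax (F a0 s) (map (fun k => F k s) L)).
Proof.
  intros H0 H. induction L as [|a L IH]; simpl.
  - exact H0.
  - apply (good_max t M l (F a)). apply H; left; auto. apply IH. intros; apply H; right; auto.
Qed.

Lemma good_maxR t M l n (F : nat -> R -> R) : (0 < n)%nat ->
  (forall k, (k < n)%nat -> good t M l (F k)) -> good t M l (fun s => maxR n (fun k => F k s)).
Proof.
  intros Hn H. unfold maxR. apply good_fold. apply H; auto.
  intros k Hk. apply in_seq in Hk. apply H. lia.
Qed.

Lemma squeeze0 (f G : R -> R) (t : R) : (forall s, 0 <= f s <= G s) -> G t = 0 -> is_derive G t 0 -> is_derive f t 0.
Proof.
  intros Hs HG HD. apply is_derive_Reals in HD. apply is_derive_Reals.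
  intros eps Heps. destruct (HD eps Heps) as [del Hd]. exists del. intros h H1 H2.
  specialize (Hd h H1 H2).
  assert (Hf0 : f t = 0) by (specialize (Hs t); lra).
  assert (E1 : (f (t+h) - f t)/h - 0 = f (t+h) * / h) by (rewrite Hf0; field; auto).
  assert (E2 : (G (t+h) - G t)/h - 0 = G (t+h) * / h) by (rewrite HG; field; auto).
  rewrite E1. rewrite E2 in Hd. rewrite Rabs_mult in Hd |- *.
  specialize (Hs (t+h)).
  rewrite (Rabs_right (f (t+h))) by lra. rewrite (Rabs_right (G (t+h))) in Hd by lra.
  eapply Rle_lt_trans; [|exact Hd]. apply Rmult_le_compat_r; [apply Rabs_pos| lra].
Qed.

Lemma maxR_ext n f g : (0 < n)%nat -> (forall k, (k < n)%nat -> f k = g k) -> maxR n f = maxR n g.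
Proof.
  intros Hn H. unfold maxR. rewrite (H 0%nat Hn). f_equal.
  apply map_ext_in. intros a Ha. apply in_seq in Ha. apply H. lia.
Qed.

Lemma cont_fold (F : nat -> R -> R) a0 L t :
  continuous (F a0) t -> (forall k, In k L -> continuous (F k) t) ->
  continuous (fun s => fold_right Rmax (F a0 s) (map (fun k => F k s) L)) t.
Proof.
  intros H0 H. induction L as [|a L IH]; simpl.
  - exact H0.
  - apply (cont_max (F a)). apply H; left; auto. apply IH. intros; apply H; right; auto.
Qed.

Lemma cont_maxR n (F : nat -> R -> R) t : (0 < n)%nat ->
  (forall k, (k < n)%nat -> continuous (F k) t) -> continuous (fun s => maxR n (fun k => F k s)) t.
Proof.
  intros Hn H. unfold maxR. apply cont_fold. apply H; auto.
  intros k Hk. apply in_seq in Hk. apply H. lia.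
Qed.

Lemma maxR_nonneg n f : (0 < n)%nat -> (forall k, (k < n)%nat -> 0 <= f k) -> 0 <= maxR n f.
Proof. intros Hn H. eapply Rle_trans; [apply (H 0%nat Hn)| apply maxR_ge; auto]. Qed.

Lemma ip_minus_r d w a b : ip d w (fun k => a k - b k) = ip d w a - ip d w b.
Proof. unfold ip. rewrite <- sumR_minus. apply sumR_ext. intros; ring. Qed.
Lemma ip_plus_r d w a b : ip d w (fun k => a k + b k) = ip d w a + ip d w b.
Proof. unfold ip. rewrite <- sumR_plus. apply sumR_ext. intros; ring. Qed.
Lemma ip_opp_l d w a : ip d (fun k => - w k) a = - ip d w a.
Proof. unfold ip. replace (- sumR d (fun k => w k * a k)) with (-1 * sumR d (fun k => w k * a k)) by ring.
  rewrite <- sumR_scal. apply sumR_ext. intros; ring. Qed.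
Lemma ip_sym d u v : ip d u v = ip d v u.
Proof. unfold ip. apply sumR_ext. intros; ring. Qed.
Lemma ip_ext d u u' v v' : (forall k, (k < d)%nat -> u k = u' k /\ v k = v' k) -> ip d u v = ip d u' v'.
Proof. intros H. unfold ip. apply sumR_ext. intros k Hk. destruct (H k Hk) as [-> ->]. auto. Qed.
Lemma ip_scal_l d c w a : ip d (fun k => c * w k) a = c * ip d w a.
Proof. unfold ip. rewrite <- sumR_scal. apply sumR_ext. intros; ring. Qed.

Lemma enorm_opp d w : enorm d (fun k => - w k) = enorm d w.
Proof. unfold enorm. f_equal. apply sumR_ext. intros; ring. Qed.

Lemma unit_vec d y : 0 < enorm d y ->
  enorm d (fun k => y k / enorm d y) = 1 /\ ip d (fun k => y k / enorm d y) y = enorm d y.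
Proof.
  intros Hp. pose proof (enorm_sq d y) as Hs.
  assert (E : ip d (fun k => y k / enorm d y) y = enorm d y).
  { unfold Rdiv. rewrite (ip_ext d _ (fun k => / enorm d y * y k) y y) by (intros; split; ring).
    rewrite ip_scal_l, <- Hs. field. lra. }
  split; auto.
  rewrite enorm_ip. rewrite (ip_ext d _ (fun k => / enorm d y * y k) _ (fun k => / enorm d y * y k))
    by (intros; unfold Rdiv; split; ring).
  rewrite ip_scal_l, ip_sym, ip_scal_l, <- Hs.
  replace (/ enorm d y * (/ enorm d y * (enorm d y * enorm d y))) with 1 by (field; lra).
  apply sqrt_1.
Qed.

Lemma sumsq_zero d a : sumR d (fun k => a k ^ 2) = 0 -> forall k, (k < d)%nat -> a k = 0.
Proof.
  induction d; intros H k Hk; [lia|].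
  rewrite sumR_S in H.
  assert (0 <= sumR d (fun k => a k ^ 2)) by (apply sumR_nonneg; intros; apply pow2_ge_0).
  pose proof (pow2_ge_0 (a d)).
  destruct (Nat.eq_dec k d).
  - subst. assert (a d ^ 2 = 0) by lra. simpl in H2. rewrite Rmult_1_r in H2. apply Rmult_integral in H2. tauto.
  - apply IHd; [lra| lia].
Qed.

Lemma sqrt_sum_le d a : sqrt (sumR d (fun k => a k ^ 2)) <= sumR d (fun k => Rabs (a k)).
Proof.
  assert (Hs : 0 <= sumR d (fun k => Rabs (a k))) by (apply sumR_nonneg; intros; apply Rabs_pos).
  rewrite <- (sqrt_pow2 (sumR d (fun k => Rabs (a k)))) by exact Hs.
  apply sqrt_le_1_alt.
  induction d.
  - rewrite !sumR_0. simpl. lra.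
  - rewrite !sumR_S.
    assert (0 <= sumR d (fun k => Rabs (a k))) by (apply sumR_nonneg; intros; apply Rabs_pos).
    specialize (IHd H).
    pose proof (Rabs_pos (a d)).
    replace (a d ^ 2) with (Rabs (a d) ^ 2) by apply pow2_abs.
    nra.
Qed.

Lemma abs_deriv0 (g : R -> R) t : g t = 0 -> is_derive g t 0 -> is_derive (fun s => Rabs (g s)) t 0.
Proof.
  intros H0 Hd. apply is_derive_Reals in Hd. apply is_derive_Reals.
  intros eps Heps. destruct (Hd eps Heps) as [del Hdel]. exists del. intros h H1 H2.
  specialize (Hdel h H1 H2). rewrite H0 in *. rewrite Rabs_R0.
  replace ((Rabs (g (t + h)) - 0) / h - 0) with (Rabs (g (t+h)) / h) by (field; auto).
  replace ((g (t + h) - 0) / h - 0) with (g (t+h) / h) in Hdel by (field; auto).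
  unfold Rdiv in *. rewrite Rabs_mult in *. rewrite Rabs_Rabsolu. exact Hdel.
Qed.

Lemma enorm_ext d u v : (forall k, (k < d)%nat -> u k = v k) -> enorm d u = enorm d v.
Proof. intros H. unfold enorm. f_equal. apply sumR_ext. intros k Hk. rewrite H; auto. Qed.

Lemma cont_sq (g : R -> R) t : continuous g t -> continuous (fun r => g r ^ 2) t.
Proof.
  intros H. apply (continuous_ext (fun r => g r * g r)). { intros r. change (g r * g r = g r ^ 2). ring. }
  apply cont_mult; auto.
Qed.

Lemma cont_shift (g : R -> R) (c t : R) : continuous g (t - c) -> continuous (fun r => g (r - c)) t.
Proof.
  intros H. apply (cont_comp (fun r => r - c) g). apply cont_minus; [apply continuous_id| apply cont_const]. exact H.
Qed.

Lemma cont_enorm d (F : nat -> R -> R) t : (forall k, (k < d)%nat -> continuous (F k) t) ->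
  continuous (fun r => enorm d (fun k => F k r)) t.
Proof.
  intros H. unfold enorm. apply cont_sqrt.
  - apply sumR_nonneg. intros; apply pow2_ge_0.
  - apply (cont_sumR d (fun k r => F k r ^ 2)). intros k Hk. apply cont_sq. auto.
Qed.

Section Sys.
Variables (N d : nat) (HN : (2 <= N)%nat) (sigma tau : R) (Hsigma : 0 <= sigma) (Hst : sigma <= tau)
  (psi : R -> R)
  (psi_cont : forall r, 0 <= r ->
     filterlim psi (within (fun s => 0 <= s) (locally r)) (locally (psi r)))
  (psi_pos : forall r, 0 <= r -> 0 < psi r)
  (psi_le1 : forall r, 0 <= r -> psi r <= 1)
  (x : traj) (Hx : is_solution N d psi sigma tau x).

Notation rh := (rhs N d psi sigma tau x).
Notation ac := (acoef N d psi sigma tau x).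
Notation mv := (maxvel N d x).
Notation DX := (dx N d x).

Lemma xder i k s : (i < N)%nat -> (k < d)%nat -> 0 < s -> is_derive (fun r => x i r k) s (rh i s k).
Proof. intros. destruct Hx as [_ H']. apply H'; auto. Qed.

Lemma xDerive i k s : (i < N)%nat -> (k < d)%nat -> 0 < s -> Derive (fun r => x i r k) s = rh i s k.
Proof. intros. apply is_derive_unique. apply xder; auto. Qed.

Lemma xcont i k s : (i < N)%nat -> (k < d)%nat -> - tau < s -> continuous (fun r => x i r k) s.
Proof.
  intros Hi Hk Hs. destruct Hx as [Hc _].
  specialize (Hc i k Hi Hk s ltac:(lra)).
  intros P HP. specialize (Hc P HP). unfold filtermap in *. simpl in Hc.
  unfold within in Hc.
  assert (L : locally s (fun r => - tau < r)) by (apply (open_gt (-tau)); exact Hs).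
  generalize (filter_and _ _ Hc L). apply filter_imp. intros r [H1 H2]. apply H1. lra.
Qed.

Lemma cont_psi (g : R -> R) t : continuous g t -> (forall r, 0 <= g r) -> continuous (fun r => psi (g r)) t.
Proof.
  intros Hg Hpos. unfold continuous.
  apply (filterlim_comp _ _ _ g psi (locally t) (within (fun s => 0 <= s) (locally (g t)))).
  - intros P HP. unfold within in HP. specialize (Hg _ HP). unfold filtermap in *.
    apply (filter_imp _ _ (fun r H => H (Hpos r)) Hg).
  - apply psi_cont. apply Hpos.
Qed.

Lemma ac_cont i j s : (i < N)%nat -> (j < N)%nat -> 0 < s -> continuous (fun r => ac i j r) s.
Proof.
  intros Hi Hj Hs. unfold acoef. apply cont_mult; [apply cont_const|].
  apply (cont_psi (fun r => enorm d (fun k => x i (r - sigma) k - x j (r - tau) k))).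
  - apply (cont_enorm d (fun k r => x i (r - sigma) k - x j (r - tau) k)). intros k Hk.
    apply cont_minus; apply (cont_shift (fun r => x _ r k)); apply xcont; auto; lra.
  - intros; apply enorm_nonneg.
Qed.

Lemma rh_cont i k s : (i < N)%nat -> (k < d)%nat -> 0 < s -> continuous (fun r => rh i r k) s.
Proof.
  intros Hi Hk Hs. unfold rhs.
  apply (cont_sumR N (fun j r => if Nat.eqb j i then 0 else ac i j r * (x j (r - tau) k - x i (r - sigma) k))).
  intros j Hj. destruct (Nat.eqb j i); [apply cont_const|].
  apply cont_mult; [apply ac_cont; auto|].
  apply cont_minus; apply (cont_shift (fun r => x _ r k)); apply xcont; auto; lra.
Qed.

Lemma mv_eq s : 0 < s -> mv s = maxR N (fun l => enorm d (fun k => rh l s k)).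
Proof.
  intros Hs. unfold maxvel. apply maxR_ext; [lia|]. intros l Hl. apply enorm_ext. intros k Hk.
  apply xDerive; auto.
Qed.

Lemma mv_cont s : 0 < s -> continuous mv s.
Proof.
  intros Hs. apply (continuous_ext_loc _ (fun r => maxR N (fun l => enorm d (fun k => rh l r k)))).
  - apply (filter_imp (fun r => 0 < r)). { intros r Hr. symmetry. apply mv_eq. auto. }
    apply (open_gt 0). exact Hs.
  - apply (cont_maxR N (fun l r => enorm d (fun k => rh l r k))); [lia|].
    intros l Hl. apply (cont_enorm d (fun k r => rh l r k)). intros; apply rh_cont; auto.
Qed.

Lemma mv_nonneg s : 0 <= mv s.
Proof. unfold maxvel. apply maxR_nonneg; [lia|]. intros; apply enorm_nonneg. Qed.

Lemma DX_nonneg s : 0 <= DX s.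
Proof. unfold dx. apply maxR_nonneg; [lia|]. intros. apply maxR_nonneg; [lia|]. intros; apply enorm_nonneg. Qed.

Lemma DX_cont s : - tau < s -> continuous DX s.
Proof.
  intros Hs. unfold dx.
  apply (cont_maxR N (fun i r => maxR N (fun j => enorm d (fun k => x i r k - x j r k)))); [lia|].
  intros i Hi. apply (cont_maxR N (fun j r => enorm d (fun k => x i r k - x j r k))); [lia|].
  intros j Hj. apply (cont_enorm d (fun k r => x i r k - x j r k)). intros k Hk.
  apply cont_minus; apply xcont; auto.
Qed.

Lemma fij_le i j s : (i < N)%nat -> (j < N)%nat -> enorm d (fun k => x i s k - x j s k) <= DX s.
Proof.
  intros Hi Hj. unfold dx. eapply Rle_trans; [| apply (maxR_ge N _ i Hi)].
  apply (maxR_ge N (fun j => enorm d (fun k => x i s k - x j s k)) j Hj).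
Qed.

Lemma NN1 : 0 < INR (N - 1).
Proof. apply lt_0_INR. lia. Qed.

Lemma ac_nonneg i j s : 0 <= ac i j s.
Proof.
  unfold acoef. apply Rmult_le_pos; [left; apply Rinv_0_lt_compat, NN1|].
  left. apply psi_pos. apply enorm_nonneg.
Qed.

Lemma ac_le i j s : ac i j s <= / INR (N - 1).
Proof.
  unfold acoef. pose proof (psi_le1 _ (enorm_nonneg d (fun k => x i (s - sigma) k - x j (s - tau) k))).
  pose proof (Rinv_0_lt_compat _ NN1). nra.
Qed.

Lemma amin_le i j s : (i < N)%nat -> (j < N)%nat -> amin N d psi sigma tau x s <= ac i j s.
Proof.
  intros Hi Hj. unfold amin. eapply Rle_trans; [apply (minR_le N _ i Hi)|].
  apply (minR_le N (fun j => ac i j s) j Hj).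
Qed.

Lemma sum_ac c s : (c < N)%nat -> sumR N (fun m => if Nat.eqb m c then 0 else ac c m s) <= 1.
Proof.
  intros Hc. eapply Rle_trans.
  - apply (sumR_le N _ (fun m => / INR (N - 1) * (if Nat.eqb m c then 0 else 1))).
    intros m _. destruct (Nat.eqb m c); [lra| rewrite Rmult_1_r; apply ac_le].
  - rewrite sumR_scal, sumR_indic by auto. rewrite minus_INR by lia. simpl.
    right. field. pose proof NN1. rewrite minus_INR in H by lia. simpl in H. lra.
Qed.

Lemma ex_RInt_mv a b : 0 < a -> a <= b -> ex_RInt mv a b.
Proof.
  intros Ha Hab. apply (ex_RInt_continuous (V := R_CompleteNormedModule)). intros z Hz.
  rewrite Rmin_left in Hz by lra. apply mv_cont. lra.
Qed.

Lemma RInt_mv_nonneg a b : 0 < a -> a <= b -> 0 <= RInt mv a b.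
Proof.
  intros Ha Hab. apply RInt_ge_0; auto. apply ex_RInt_mv; auto. intros; apply mv_nonneg.
Qed.

Lemma RInt_mv_sub a c e b : 0 < a -> a <= c -> c <= e -> e <= b -> RInt mv c e <= RInt mv a b.
Proof.
  intros Ha H1 H2 H3.
  rewrite <- (RInt_Chasles mv a c b) by (apply ex_RInt_mv; lra).
  rewrite <- (RInt_Chasles mv c e b) by (apply ex_RInt_mv; lra).
  pose proof (RInt_mv_nonneg a c Ha H1). pose proof (RInt_mv_nonneg e b ltac:(lra) H3).
  change (plus (RInt mv a c) (plus (RInt mv c e) (RInt mv e b))) with
    (RInt mv a c + (RInt mv c e + RInt mv e b)). lra.
Qed.

Lemma proj_bound w l a b : enorm d w <= 1 -> (l < N)%nat -> 0 < a -> a <= b ->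
  ip d w (fun k => x l b k - x l a k) <= RInt mv a b.
Proof.
  intros Hw Hl Ha Hab.
  set (g := fun s => sumR d (fun k => w k * x l s k)).
  set (g' := fun s => sumR d (fun k => w k * rh l s k)).
  assert (HI : is_RInt g' a b (minus (g b) (g a))).
  { apply (is_RInt_derive (V := R_CompleteNormedModule)).
    - intros z Hz. rewrite Rmin_left in Hz by lra.
      apply (derive_sumR d (fun k s => w k * x l s k) (fun k => w k * rh l z k)).
      intros k Hk. apply is_derive_scal. apply xder; auto; lra.
    - intros z Hz. rewrite Rmin_left in Hz by lra.
      apply (cont_sumR d (fun k s => w k * rh l s k)). intros k Hk.
      apply cont_mult; [apply cont_const| apply rh_cont; auto; lra]. }
  assert (E : ip d w (fun k => x l b k - x l a k) = RInt g' a b).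
  { rewrite (is_RInt_unique _ _ _ _ HI). change (minus (g b) (g a)) with (g b - g a).
    unfold g, ip. rewrite <- sumR_minus. apply sumR_ext. intros; ring. }
  rewrite E. apply RInt_le; auto.
  - exists (minus (g b) (g a)); exact HI.
  - apply ex_RInt_mv; auto.
  - intros z Hz. unfold g'. rewrite mv_eq by lra.
    eapply Rle_trans; [apply (cauchy_schwarz d w (fun k => rh l z k))|].
    eapply Rle_trans; [| apply (maxR_ge N (fun l => enorm d (fun k => rh l z k)) l Hl)].
    pose proof (enorm_nonneg d (fun k => rh l z k)). pose proof (enorm_nonneg d w). nra.
Qed.


Lemma sumR_zero n : sumR n (fun _ => 0) = 0.
Proof. rewrite sumR_const. ring. Qed.

Lemma ip_rh w c s : ip d w (fun k => rh c s k) =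
  sumR N (fun m => if Nat.eqb m c then 0 else ac c m s * ip d w (fun k => x m (s - tau) k - x c (s - sigma) k)).
Proof.
  unfold ip, rhs.
  transitivity (sumR d (fun k => sumR N (fun m => w k * (if Nat.eqb m c then 0 else
     ac c m s * (x m (s - tau) k - x c (s - sigma) k))))).
  { apply sumR_ext. intros k _. rewrite sumR_scal. reflexivity. }
  rewrite sumR_swap. apply sumR_ext. intros m _. destruct (Nat.eqb m c).
  - transitivity (sumR d (fun _ => 0)); [apply sumR_ext; intros; ring| apply sumR_zero].
  - rewrite <- sumR_scal. apply sumR_ext. intros; ring.
Qed.

Lemma ip_self_zero w a : ip d w (fun k => a k - a k) = 0.
Proof. rewrite ip_minus_r. ring. Qed.

Lemma velbound s : tau < s -> mv s <= DX (s - tau) + RInt mv (s - tau) s.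
Proof.
  intros Hs. assert (Hs0 : 0 < s) by lra.
  assert (HB : 0 <= DX (s - tau) + RInt mv (s - tau) s).
  { pose proof (DX_nonneg (s - tau)). pose proof (RInt_mv_nonneg (s - tau) s ltac:(lra) ltac:(lra)). lra. }
  rewrite mv_eq by auto.
  destruct (maxR_ex N (fun l => enorm d (fun k => rh l s k)) ltac:(lia)) as [l [Hl ->]].
  set (y := fun k => rh l s k).
  destruct (Rle_lt_or_eq_dec 0 (enorm d y) (enorm_nonneg d y)) as [Hp|Hz]; [|rewrite <- Hz; exact HB].
  destruct (unit_vec d y Hp) as [Hw Hip]. rewrite <- Hip. unfold y. rewrite ip_rh.
  set (w := fun k => y k / enorm d y) in *. set (B := DX (s - tau) + RInt mv (s - tau) s) in *.
  eapply Rle_trans.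
  - apply (sumR_le N _ (fun m => (if Nat.eqb m l then 0 else ac l m s) * B)).
    intros m Hm. destruct (Nat.eqb m l) eqn:E; [lra|].
    apply Rmult_le_compat_l; [apply ac_nonneg|].
    rewrite (ip_ext d w w _ (fun k => (x m (s - tau) k - x l (s - tau) k) + (x l (s - tau) k - x l (s - sigma) k)))
      by (intros; split; ring).
    rewrite ip_plus_r. unfold B. apply Rplus_le_compat.
    + eapply Rle_trans; [apply cauchy_schwarz|]. rewrite Hw, Rmult_1_l. apply fij_le; auto.
    + rewrite (ip_ext d w (fun k => - (- w k)) _ (fun k => - (x l (s - sigma) k - x l (s - tau) k)))
        by (intros; split; ring).
      unfold ip. rewrite <- (sumR_ext d (fun k => (- w k) * (x l (s - sigma) k - x l (s - tau) k))) by (intros; ring).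
      fold (ip d (fun k => - w k) (fun k => x l (s - sigma) k - x l (s - tau) k)).
      eapply Rle_trans; [apply proj_bound; auto; try lra|].
      * rewrite enorm_opp. lra.
      * apply RInt_mv_sub; lra.
  - rewrite <- (sumR_ext N (fun m => B * (if Nat.eqb m l then 0 else ac l m s))) by (intros; ring).
    rewrite sumR_scal. pose proof (sum_ac l s Hl).
    pose proof (sumR_nonneg N (fun m => if Nat.eqb m l then 0 else ac l m s)
      ltac:(intros m _; cbv beta; destruct (Nat.eqb m l); [lra| apply ac_nonneg])). nra.
Qed.

Lemma side w c t : enorm d w <= 1 -> (c < N)%nat -> 2 * tau < t ->
  (forall m, (m < N)%nat -> ip d w (fun k => x m t k - x c t k) <= 0) ->
  ip d w (fun k => rh c t k) <=
    amin N d psi sigma tau x t * sumR N (fun m => ip d w (fun k => x m t k - x c t k))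
    + 2 * RInt mv (t - tau) t.
Proof.
  intros Hw Hc Ht HD. rewrite ip_rh.
  set (I1 := RInt mv (t - tau) t). set (am := amin N d psi sigma tau x t).
  assert (HI1 : 0 <= I1) by (apply RInt_mv_nonneg; lra).
  eapply Rle_trans.
  - apply (sumR_le N _ (fun m => am * ip d w (fun k => x m t k - x c t k) +
                                 2 * I1 * (if Nat.eqb m c then 0 else ac c m t))).
    intros m Hm. destruct (Nat.eqb m c) eqn:E.
    + apply Nat.eqb_eq in E. subst m. rewrite ip_self_zero. lra.
    + rewrite (ip_ext d w w _ (fun k => (x m t k - x c t k) + ((x m (t - tau) k - x m t k) + (x c t k - x c (t - sigma) k))))
        by (intros; split; ring).
      rewrite !ip_plus_r.
      assert (A1 : ip d w (fun k => x m (t - tau) k - x m t k) <= I1).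
      { rewrite (ip_ext d w (fun k => - (- w k)) _ (fun k => - (x m t k - x m (t - tau) k)))
          by (intros; split; ring).
        unfold ip. rewrite <- (sumR_ext d (fun k => (- w k) * (x m t k - x m (t - tau) k))) by (intros; ring).
        fold (ip d (fun k => - w k) (fun k => x m t k - x m (t - tau) k)).
        apply proj_bound; auto; try lra. rewrite enorm_opp; lra. }
      assert (A2 : ip d w (fun k => x c t k - x c (t - sigma) k) <= I1).
      { eapply Rle_trans; [apply proj_bound; auto; lra|]. apply RInt_mv_sub; lra. }
      pose proof (HD m Hm). pose proof (amin_le c m t Hc Hm). pose proof (ac_nonneg c m t).
      fold am in H0. nra.
  - rewrite sumR_plus, sumR_scal, sumR_scal. pose proof (sum_ac c t Hc). nra.
Qed.

Lemma main_ineq i j t : (i < N)%nat -> (j < N)%nat -> 2 * tau < t ->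
  0 < DX t -> enorm d (fun k => x i t k - x j t k) = DX t ->
  ip d (fun k => (x i t k - x j t k) / DX t) (fun k => rh i t k - rh j t k) <=
  4 * RInt mv (t - tau) t - INR N * amin N d psi sigma tau x t * DX t.
Proof.
  intros Hi Hj Ht HM HA.
  set (M := DX t) in *. set (v := fun k => x i t k - x j t k).
  destruct (unit_vec d v ltac:(unfold v; rewrite HA; exact HM)) as [He Hev].
  unfold v in He, Hev. rewrite HA in He, Hev. fold M in He, Hev.
  set (e := fun k => (x i t k - x j t k) / M) in *.
  rewrite ip_minus_r.
  assert (Eopp : - ip d e (fun k => rh j t k) = ip d (fun k => - e k) (fun k => rh j t k)) by (rewrite ip_opp_l; ring).
  assert (Hev' : ip d e (x i t) - ip d e (x j t) = M) by (rewrite <- ip_minus_r; exact Hev).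
  pose proof (side e i t ltac:(lra) Hi Ht) as S1.
  pose proof (side (fun k => - e k) j t ltac:(rewrite enorm_opp; lra) Hj Ht) as S2.
  assert (C1 : forall m, (m < N)%nat -> ip d e (fun k => x m t k - x i t k) <= 0).
  { intros m Hm. rewrite ip_minus_r.
    pose proof (cauchy_schwarz d e (fun k => x m t k - x j t k)). rewrite He, Rmult_1_l, ip_minus_r in H.
    pose proof (fij_le m j t Hm Hj). fold M in H0. lra. }
  assert (C2 : forall m, (m < N)%nat -> ip d (fun k => - e k) (fun k => x m t k - x j t k) <= 0).
  { intros m Hm. rewrite ip_opp_l, ip_minus_r.
    pose proof (cauchy_schwarz d e (fun k => x i t k - x m t k)). rewrite He, Rmult_1_l, ip_minus_r in H.
    pose proof (fij_le i m t Hi Hm). fold M in H0. lra. }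
  specialize (S1 C1). specialize (S2 C2).
  assert (Sum : sumR N (fun m => ip d e (fun k => x m t k - x i t k)) +
                sumR N (fun m => ip d (fun k => - e k) (fun k => x m t k - x j t k)) = INR N * (- M)).
  { rewrite <- sumR_plus, <- sumR_const. apply sumR_ext. intros m _.
    rewrite ip_opp_l, !ip_minus_r. lra. }
  set (am := amin N d psi sigma tau x t) in *.
  set (I1 := RInt mv (t - tau) t) in *.
  assert (am * sumR N (fun m => ip d e (fun k => x m t k - x i t k)) +
          am * sumR N (fun m => ip d (fun k => - e k) (fun k => x m t k - x j t k)) = am * (INR N * - M))
    by (rewrite <- Rmult_plus_distr_l, Sum; reflexivity).
  change (fun k => rh i t k) with (rh i t) in *. change (fun k => rh j t k) with (rh j t) in *. lra.
Qed.

Lemma I1_bound t : 2 * tau < t ->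
  RInt mv (t - tau) t <= RInt (fun s => DX (s - tau)) (t - tau) t + tau * RInt mv (t - 2 * tau) t.
Proof.
  intros Ht.
  assert (Ex1 : ex_RInt (fun s => DX (s - tau)) (t - tau) t).
  { apply (ex_RInt_continuous (V := R_CompleteNormedModule)). intros z Hz.
    rewrite Rmin_left in Hz by lra. apply (cont_shift DX). apply DX_cont. lra. }
  assert (Ex2 : ex_RInt (fun s => DX (s - tau) + RInt mv (t - 2 * tau) t) (t - tau) t).
  { apply (ex_RInt_plus (V := R_CompleteNormedModule)); auto. apply ex_RInt_const. }
  eapply Rle_trans.
  - apply (RInt_le _ (fun s => DX (s - tau) + RInt mv (t - 2 * tau) t)); auto; try lra.
    + apply ex_RInt_mv; lra.
    + intros s Hs. eapply Rle_trans; [apply velbound; lra|].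
      apply Rplus_le_compat_l. apply RInt_mv_sub; lra.
  - rewrite (RInt_plus (V := R_CompleteNormedModule)); auto; [|apply ex_RInt_const].
    rewrite RInt_const. change (scal (t - (t - tau)) (RInt mv (t - 2 * tau) t)) with
      ((t - (t - tau)) * RInt mv (t - 2 * tau) t).
    change (plus (RInt (fun s => DX (s - tau)) (t - tau) t) ((t - (t - tau)) * RInt mv (t - 2 * tau) t))
      with (RInt (fun s => DX (s - tau)) (t - tau) t + (t - (t - tau)) * RInt mv (t - 2 * tau) t).
    right. ring.
Qed.


Definition hsq i j s := sumR d (fun k => (x i s k - x j s k) ^ 2).
Definition hder i j t := sumR d (fun k => 2 * (x i t k - x j t k) * (rh i t k - rh j t k)).
Definition Zr (g : R -> R) t := g t = 0 /\ exists l, l <> 0 /\ is_derive g t l.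

Lemma hsq_der i j t : (i < N)%nat -> (j < N)%nat -> 0 < t -> is_derive (hsq i j) t (hder i j t).
Proof.
  intros Hi Hj Ht. unfold hsq, hder.
  apply (derive_sumR d (fun k s => (x i s k - x j s k) ^ 2)). intros k Hk.
  assert (Hm : is_derive (fun s => x i s k - x j s k) t (rh i t k - rh j t k)).
  { apply (is_derive_minus (fun s => x i s k) (fun s => x j s k)); apply xder; auto. }
  pose proof (is_derive_pow (fun s => x i s k - x j s k) 2 t _ Hm) as H.
  replace (2 * (x i t k - x j t k) * (rh i t k - rh j t k)) with
    (INR 2 * (rh i t k - rh j t k) * (x i t k - x j t k) ^ Init.Nat.pred 2) by (simpl; ring).
  exact H.
Qed.

Lemma Fij_sq i j s : enorm d (fun k => x i s k - x j s k) * enorm d (fun k => x i s k - x j s k) = hsq i j s.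
Proof. unfold enorm, hsq. apply sqrt_sqrt. apply sumR_nonneg. intros; apply pow2_ge_0. Qed.

Lemma Fij_der i j t : (i < N)%nat -> (j < N)%nat -> 0 < t -> 0 < enorm d (fun k => x i t k - x j t k) ->
  is_derive (fun s => enorm d (fun k => x i s k - x j s k)) t (hder i j t / (2 * enorm d (fun k => x i t k - x j t k))).
Proof.
  intros Hi Hj Ht Hp.
  assert (Hh : 0 < hsq i j t) by (rewrite <- Fij_sq; nra).
  exact (is_derive_sqrt (hsq i j) t (hder i j t) (hsq_der i j t Hi Hj Ht) Hh).
Qed.

Lemma Fij_cont i j t : (i < N)%nat -> (j < N)%nat -> 0 < t ->
  continuous (fun s => enorm d (fun k => x i s k - x j s k)) t.
Proof.
  intros Hi Hj Ht. apply (cont_enorm d (fun k s => x i s k - x j s k)). intros k Hk.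
  apply cont_minus; apply xcont; auto; lra.
Qed.

Lemma DX_max_ex t : exists i j, (i < N)%nat /\ (j < N)%nat /\ DX t = enorm d (fun k => x i t k - x j t k).
Proof.
  unfold dx. destruct (maxR_ex N (fun i => maxR N (fun j => enorm d (fun k => x i t k - x j t k))) ltac:(lia))
    as [i [Hi ->]].
  destruct (maxR_ex N (fun j => enorm d (fun k => x i t k - x j t k)) ltac:(lia)) as [j [Hj ->]].
  exists i, j. auto.
Qed.

Lemma dx_deriv t : 2 * tau < t ->
  (forall a b c e, ~ Zr (fun s => hsq a b s - hsq c e s) t) ->
  (forall a b c, ~ Zr (fun s => x a s c - x b s c) t) ->
  exists L, is_derive DX t L /\ L <= 4 * RInt mv (t - tau) t - INR N * amin N d psi sigma tau x t * DX t.
Proof.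
  intros Ht NE1 NE2. assert (Ht0 : 0 < t) by lra.
  set (M := DX t).
  assert (HI1 : 0 <= RInt mv (t - tau) t) by (apply RInt_mv_nonneg; lra).
  assert (Hgood : forall L, (forall i j, (i < N)%nat -> (j < N)%nat ->
             good t M L (fun s => enorm d (fun k => x i s k - x j s k))) -> is_derive DX t L).
  { intros L HL.
    assert (G : good t M L DX).
    { unfold dx. apply (good_maxR t M L N (fun i s => maxR N (fun j => enorm d (fun k => x i s k - x j s k)))); [lia|].
      intros i Hi. apply (good_maxR t M L N (fun j s => enorm d (fun k => x i s k - x j s k))); [lia|].
      intros j Hj. apply HL; auto. }
    destruct G as [[_ G]|[_ G]]; [unfold M in G; lra| exact G]. }
  destruct (Rle_lt_or_eq_dec 0 M (DX_nonneg t)) as [HM|HM].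
  - destruct (DX_max_ex t) as [i0 [j0 [Hi0 [Hj0 HA]]]]. fold M in HA.
    exists (hder i0 j0 t / (2 * M)). split.
    + apply Hgood. intros i j Hi Hj.
      pose proof (fij_le i j t Hi Hj) as Hle. fold M in Hle.
      destruct (Rle_lt_or_eq_dec _ _ Hle) as [Hlt|Heq].
      * left. split; auto. apply Fij_cont; auto.
      * right. split; auto.
        assert (Hd : hder i j t = hder i0 j0 t).
        { destruct (Req_dec (hder i j t - hder i0 j0 t) 0) as [E|E]; [lra|].
          exfalso. apply (NE1 i j i0 j0). split.
          - rewrite <- !Fij_sq. rewrite Heq, <- HA. ring.
          - exists (hder i j t - hder i0 j0 t). split; auto.
            apply (is_derive_minus (hsq i j) (hsq i0 j0)); apply hsq_der; auto. }
        rewrite <- Hd. rewrite <- Heq. apply Fij_der; auto. lra.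
    + pose proof (main_ineq i0 j0 t Hi0 Hj0 Ht ltac:(fold M; lra) ltac:(fold M; auto)) as H.
      fold M in H. eapply Rle_trans; [|exact H]. right.
      unfold hder, ip.
      rewrite (sumR_ext d (fun k => (x i0 t k - x j0 t k) / M * (rh i0 t k - rh j0 t k))
                 (fun k => / (2 * M) * (2 * (x i0 t k - x j0 t k) * (rh i0 t k - rh j0 t k))))
        by (intros; field; lra).
      rewrite sumR_scal. field. lra.
  - exists 0. split.
    + apply Hgood. intros i j Hi Hj.
      pose proof (fij_le i j t Hi Hj) as Hle. fold M in Hle. rewrite <- HM in Hle.
      pose proof (enorm_nonneg d (fun k => x i t k - x j t k)).
      assert (Hz : enorm d (fun k => x i t k - x j t k) = 0) by lra.
      right. split; [rewrite Hz; auto|].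
      assert (Hc : forall k, (k < d)%nat -> x i t k - x j t k = 0).
      { apply sumsq_zero. apply sqrt_eq_0; [apply sumR_nonneg; intros; apply pow2_ge_0| exact Hz]. }
      apply (squeeze0 _ (fun s => sumR d (fun k => Rabs (x i s k - x j s k)))).
      * intros s. split; [apply enorm_nonneg| apply sqrt_sum_le].
      * rewrite <- (sumR_zero d). apply sumR_ext. intros k Hk. rewrite Hc; auto. apply Rabs_R0.
      * rewrite <- (sumR_zero d).
        apply (derive_sumR d (fun k s => Rabs (x i s k - x j s k)) (fun _ => 0)). intros k Hk.
        apply (abs_deriv0 (fun s => x i s k - x j s k)); [apply Hc; auto|].
        assert (Dk : is_derive (fun s => x i s k - x j s k) t (rh i t k - rh j t k)).
        { apply (is_derive_minus (fun s => x i s k) (fun s => x j s k)); apply xder; auto. }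
        destruct (Req_dec (rh i t k - rh j t k) 0) as [E|E]; [rewrite E in Dk; exact Dk|].
        exfalso. apply (NE2 i j k). split; [apply Hc; auto| exists (rh i t k - rh j t k); auto].
    + rewrite <- HM. lra.
Qed.

End Sys.

Lemma cover_pt (t : R) (n : nat) : exists K m : nat,
  - INR K + INR m / INR (S n) <= t < - INR K + (INR m + 1) / INR (S n).
Proof.
  assert (Hn : 0 < INR (S n)) by (apply lt_0_INR; lia).
  destruct (archimed (Rabs t)) as [H1 H2].
  assert (Hz : (0 < up (Rabs t))%Z).
  { apply lt_IZR. pose proof (Rabs_pos t). lra. }
  set (K := Z.to_nat (up (Rabs t))).
  assert (HK : INR K = IZR (up (Rabs t))).
  { unfold K. rewrite INR_IZR_INZ. rewrite Z2Nat.id by lia. reflexivity. }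
  set (r := (t + INR K) * INR (S n)).
  assert (Hr : 0 < r).
  { unfold r. apply Rmult_lt_0_compat; [|exact Hn].
    pose proof (Rle_abs (-t)). rewrite Rabs_Ropp in H. lra. }
  destruct (archimed r) as [H3 H4].
  assert (Hz2 : (1 <= up r)%Z).
  { assert (0 < up r)%Z by (apply lt_IZR; lra). lia. }
  exists K, (Z.to_nat (up r - 1)).
  assert (Hm : INR (Z.to_nat (up r - 1)) = IZR (up r) - 1).
  { rewrite INR_IZR_INZ. rewrite Z2Nat.id by lia. rewrite minus_IZR. reflexivity. }
  rewrite Hm.
  assert (E : t = - INR K + r / INR (S n)).
  { unfold r. field. lra. }
  split.
  - rewrite E. apply Rplus_le_compat_l. unfold Rdiv. apply Rmult_le_compat_r.
    + left; apply Rinv_0_lt_compat; lra.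
    + lra.
  - rewrite E. apply Rplus_lt_compat_l. unfold Rdiv. apply Rmult_lt_compat_r.
    + apply Rinv_0_lt_compat; lra.
    + lra.
Qed.

Module MeasPart.
Import all_boot all_classical all_reals Rstruct Rstruct_topology measure lebesgue_measure.
Local Open Scope classical_set_scope.

Lemma neg_subsingleton (B : set R) :
  (forall a b, B a -> B b -> a = b) -> (@lebesgue_measure R).-negligible B.
Proof.
  move=> HB.
  case: (pselect (exists a, B a)) => [[a Ba]|nB].
  - exists [set a]; split; [exact: measurable_set1 | exact: lebesgue_measure_set1 |].
    by move=> b Bb; rewrite /= (HB b a).
  - exists set0; split; [exact: measurable0 | exact: measure0 |].
    by move=> b Bb; apply: nB; exists b.
Qed.

Lemma isolated_negligible (A : R -> Prop) :
  (forall t, A t -> exists n : nat, forall s, A s -> Rabs (s - t) < / INR (S n) -> s = t) ->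
  (@lebesgue_measure R).-negligible A.
Proof.
  move=> HA.
  pose B (K n m : nat) : set R := fun t => A t /\
     (forall s, A s -> Rabs (s - t) < / INR (S n) -> s = t) /\
     (- INR K + INR m / INR (S n) <= t < - INR K + (INR m + 1) / INR (S n))%R.
  have Hc : A `<=` \bigcup_K \bigcup_n \bigcup_m B K n m.
    move=> t At. have [n Hn] := HA t At. have [K [m Hm]] := cover_pt t n.
    by exists K => //; exists n => //; exists m => //.
  have Hneg : (@lebesgue_measure R).-negligible (\bigcup_K \bigcup_n \bigcup_m B K n m).
    apply: negligible_bigcup => K; apply: negligible_bigcup => n;
      apply: negligible_bigcup => m.
    apply: neg_subsingleton => a b [Aa [Ha Ia]] [Ab [Hb Ib]].
    apply: esym; apply: Ha => //.
    have Hn : (0 < INR (S n))%R by apply: lt_0_INR; lia.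
    have E1 : ((INR m + 1) / INR (S n) = INR m / INR (S n) + / INR (S n))%R.
      by rewrite /Rdiv Rmult_plus_distr_r Rmult_1_l.
    rewrite E1 in Ia Ib.
    apply: Rabs_def1; lra.
  case: Hneg => C [mC C0 HC]; exists C; split => //.
  exact: subset_trans HC.
Qed.

Lemma ae_from (P : R -> Prop) (Zs : nat -> nat -> nat -> nat -> R -> Prop)
  (Zt : nat -> nat -> nat -> R -> Prop) :
  (forall a b c e t, Zs a b c e t -> exists n : nat, forall s, Zs a b c e s -> Rabs (s - t) < / INR (S n) -> s = t) ->
  (forall a b c t, Zt a b c t -> exists n : nat, forall s, Zt a b c s -> Rabs (s - t) < / INR (S n) -> s = t) ->
  (forall t, (forall a b c e, ~ Zs a b c e t) -> (forall a b c, ~ Zt a b c t) -> P t) -> ae_R P.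
Proof.
  move=> H1 H2 H3.
  have N1 : (@lebesgue_measure R).-negligible
      ((\bigcup_a \bigcup_b \bigcup_c \bigcup_e (Zs a b c e : set R)) `|` (\bigcup_a \bigcup_b \bigcup_c (Zt a b c : set R))).
    apply: negligibleU.
    - do 4 (apply: negligible_bigcup => ?). apply: isolated_negligible => t Ht. exact: H1.
    - do 3 (apply: negligible_bigcup => ?). apply: isolated_negligible => t Ht. exact: H2.
  case: N1 => C [mC C0 HC]; exists C; split => //.
  move=> t /= nPt; apply: HC.
  case: (pselect (exists a b c e, Zs a b c e t)) => [[a [b [c [e Z]]]]|n1].
    by left; exists a => //; exists b => //; exists c => //; exists e.
  case: (pselect (exists a b c, Zt a b c t)) => [[a [b [c Z]]]|n2].
    by right; exists a => //; exists b => //; exists c.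
  exfalso; apply: nPt; apply: H3.
  - by move=> a b c e Z; apply: n1; exists a, b, c, e.
  - by move=> a b c Z; apply: n2; exists a, b, c.
Qed.
End MeasPart.

Theorem corollary3p3
  (N d : nat) (HN : (2 <= N)%nat) (Hd : (1 <= d)%nat)
  (sigma tau : R) (Hsigma : 0 <= sigma) (Hst : sigma <= tau)
  (psi : R -> R)
  (psi_cont : forall r, 0 <= r ->
     filterlim psi (within (fun s => 0 <= s) (locally r)) (locally (psi r)))
  (psi_noninc : forall r s, 0 <= r -> r <= s -> psi s <= psi r)
  (psi_pos : forall r, 0 <= r -> 0 < psi r)
  (psi_le1 : forall r, 0 <= r -> psi r <= 1)
  (x : traj) (Hx : is_solution N d psi sigma tau x) :
  ae_R (fun t => 2 * tau < t ->
    ex_derive (dx N d x) t /\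
    Derive (dx N d x) t <=
      4 * RInt (fun s => dx N d x (s - tau)) (t - tau) t
      + 4 * tau * RInt (fun r => maxvel N d x r) (t - 2 * tau) t
      - INR N * amin N d psi sigma tau x t * dx N d x t).
Proof.
  apply (MeasPart.ae_from _ (fun a b c e => Zr (fun s => hsq d x a b s - hsq d x c e s))
                            (fun a b c => Zr (fun s => x a s c - x b s c))).
  - intros a b c e t [H0 [l [Hl Hd']]].
    destruct (iso_zero _ t l H0 Hd' Hl) as [n Hn]. exists n. intros s [Hs _]. apply Hn; auto.
  - intros a b c t [H0 [l [Hl Hd']]].
    destruct (iso_zero _ t l H0 Hd' Hl) as [n Hn]. exists n. intros s [Hs _]. apply Hn; auto.
  - intros t NE1 NE2 Ht.
    destruct (dx_deriv N d HN sigma tau Hsigma Hst psi psi_cont psi_pos psi_le1 x Hx t Ht NE1 NE2)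
      as [L [HL HLe]].
    split; [exists L; exact HL|].
    rewrite (is_derive_unique _ _ _ HL).
    pose proof (I1_bound N d HN sigma tau Hsigma Hst psi psi_cont psi_pos psi_le1 x Hx t Ht) as HI.
    assert (Htau : 0 <= tau) by lra.
    change (fun r => maxvel N d x r) with (maxvel N d x).
    nra.
Qed.
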